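(* Let $m,n\ge1$, let $a_1,\dots,a_n\in\mathbb{C}$ be distinct, let $m_1,\dots,m_n\ge 1$ be integers, let $c_0,\dots,c_{m-1},b_k^{(j)}\in\mathbb{C}$, and let $$r(\lambda)=\lambda^m-c_{m-1}\lambda^{m-1}-\cdots-c_1\lambda-c_0-\sum_{j=1}^n\sum_{k=1}^{m_j}\frac{b_k^{(j)}}{(\lambda-a_j)^k}.$$ If $\lambda_0$ is a zero of $r$, then (1) $|\lambda_0|\le \max_{1\le j\le n}\Big\{1+|a_j|,\ \sum_{j=1}^n\sum_{k=1}^{m_j}|b_k^{(j)}|+\sum_{i=0}^{m-1}|c_i|\Big\}$; (2) if every $m_j=1$ (writing $b^{(j)}=b^{(j)}_1$), then $|\lambda_0|\le\max_{1\le j\le n,\,1\le i\le m-1}\{|a_j|+|b^{(j)}|,\ 1+|c_i|,\ |c_0|+n\}$; otherwise $|\lambda_0|\le \max_{1\le j\le n,\,1\le k\le m_j,\,1\le i\le m-1}\Big\{|a_j|+|b_k^{(j)}|,\ 1+|a_j|,\ 1+|c_i|,\ |c_0|+\sum_{j=1}^n m_j\Big\}$.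
   Context: A zero of $r$ is a $\lambda_0\in\mathbb{C}\setminus\{a_1,\dots,a_n\}$ with $r(\lambda_0)=0$. *)

(* Defs.v *)
From HB Require Import structures.
From mathcomp Require Import all_boot all_order all_algebra.
From mathcomp Require Import reals complex.
Set Implicit Arguments. Unset Strict Implicit. Unset Printing Implicit Defensive.
Import Order.TTheory GRing.Theory Num.Theory.
Local Open Scope ring_scope.

Definition ratfun {R : realType} (m n : nat) (c : nat -> R[i]) (a : 'I_n -> R[i])
  (mu : 'I_n -> nat) (b : 'I_n -> nat -> R[i]) (l : R[i]) : R[i] :=
  l ^+ m - \sum_(i < m) c i * l ^+ i
  - \sum_(j < n) \sum_(1 <= k < (mu j).+1) b j k / (l - a j) ^+ k.

Definition is_zero_of {R : realType} (m n : nat) (c : nat -> R[i]) (a : 'I_n -> R[i])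
  (mu : 'I_n -> nat) (b : 'I_n -> nat -> R[i]) (l : R[i]) : Prop :=
  (forall j, l != a j) /\ ratfun m c a mu b l = 0.

(* Main.v *)
Require Import Defs.
From HB Require Import structures.
From mathcomp Require Import all_boot all_order all_algebra.
From mathcomp Require Import reals complex.
From mathcomp Require Import ring lra.
Import Order.TTheory GRing.Theory Num.Theory.
Local Open Scope ring_scope.

Section Aux.
Local Open Scope complex_scope.
Context {R : realType}.
Definition nr (x : R[i]) : R := complex.Re `|x|.
Lemma normCE (x : R[i]) : `|x| = (nr x)%:C.
Proof. by rewrite /nr normc_def. Qed.
Lemma nrD (x y : R[i]) : nr (x + y) <= nr x + nr y.
Proof. by rewrite -lecR rmorphD -!normCE ler_normD. Qed.
Lemma nr_sum I (r : seq I) (P : pred I) (F : I -> R[i]) :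
  nr (\sum_(i <- r | P i) F i) <= \sum_(i <- r | P i) nr (F i).
Proof.
elim/big_rec2: _ => [|i y x _ h].
  by rewrite /nr normr0.
by apply: le_trans (nrD _ _) _; rewrite lerD2l.
Qed.
Lemma nrM (x y : R[i]) : nr (x * y) = nr x * nr y.
Proof. by apply: complexI; rewrite rmorphM -!normCE normrM. Qed.
Lemma nrX (x : R[i]) k : nr (x ^+ k) = nr x ^+ k.
Proof. by apply: complexI; rewrite rmorphXn -!normCE normrX. Qed.
Lemma nrV (x : R[i]) : nr (x ^-1) = (nr x)^-1.
Proof. by apply: complexI; rewrite fmorphV -!normCE normfV. Qed.
Lemma nr_ge0 (x : R[i]) : 0 <= nr x.
Proof. by rewrite -lecR -normCE rmorph0 normr_ge0. Qed.
Lemma nr_gt0 (x : R[i]) : x != 0 -> 0 < nr x.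
Proof. by move=> h; rewrite -ltcR -normCE rmorph0 normr_gt0. Qed.
Lemma nrB (x y : R[i]) : nr x - nr y <= nr (x - y).
Proof.
have := nrD (x - y) y; rewrite subrK; lra.
Qed.
Lemma maxC (x y : R) : Num.max x%:C y%:C = (Num.max x y)%:C.
Proof. by rewrite /Order.max ltcR; case: ifP. Qed.
Lemma bigmaxC I (r : seq I) (P : pred I) (F : I -> R) :
  \big[Num.max/0]_(i <- r | P i) (F i)%:C = (\big[Num.max/0]_(i <- r | P i) F i)%:C.
Proof.
elim/big_rec2: _ => [|i x y _ ->]; first by rewrite rmorph0.
by rewrite maxC.
Qed.
End Aux.

Section Refl.
Local Open Scope complex_scope.
Context {R : realType}.
Lemma maxE2 (x y : R) (X Y : R[i]) : X = x%:C -> Y = y%:C -> Num.max X Y = (Num.max x y)%:C.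
Proof. by move=> -> ->; exact: maxC. Qed.
Lemma bigmaxE2 I (r : seq I) (P : pred I) (F : I -> R[i]) (f : I -> R) :
  (forall i, P i -> F i = (f i)%:C) ->
  \big[Num.max/0]_(i <- r | P i) F i = (\big[Num.max/0]_(i <- r | P i) f i)%:C.
Proof. by move=> h; rewrite -bigmaxC; apply: eq_bigr. Qed.
Lemma sumE2 I (r : seq I) (P : pred I) (F : I -> R[i]) (f : I -> R) :
  (forall i, P i -> F i = (f i)%:C) ->
  \sum_(i <- r | P i) F i = (\sum_(i <- r | P i) f i)%:C.
Proof. by move=> h; rewrite rmorph_sum; apply: eq_bigr. Qed.
Lemma addE2 (x y : R) (X Y : R[i]) : X = x%:C -> Y = y%:C -> X + Y = (x + y)%:C.
Proof. by move=> -> ->; rewrite rmorphD. Qed.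
Lemma oneE2 : (1 : R[i]) = (1 : R)%:C.
Proof. by rewrite rmorph1. Qed.
Lemma natE2 k : (k%:R : R[i]) = (k%:R : R)%:C.
Proof. by rewrite rmorph_nat. Qed.
Lemma leE2 {x y : R} {X Y : R[i]} : X = x%:C -> Y = y%:C -> x <= y -> X <= Y.
Proof. by move=> -> ->; rewrite lecR. Qed.
End Refl.

Ltac toR := repeat first [ apply: maxE2 | apply: bigmaxE2 => ? _ | apply: sumE2 => ? _
  | apply: addE2 | exact: normCE | exact: oneE2 | exact: natE2 ].


Section Num.
Local Open Scope complex_scope.
Context {R : realType}.
Lemma geom_tail (L : R) m : (1 <= m)%N ->
  \sum_(1 <= i < m) (L - 1) * L ^+ i = L ^+ m - L.
Proof.
elim: m => // -[|m] IH _; first by rewrite big_geq // expr1 subrr.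
rewrite big_nat_recr //= IH //.
rewrite (exprS L m.+1); set X := L ^+ m.+1; ring.
Qed.

Lemma cpart m (C : nat -> R) L T : (1 <= m)%N -> 1 < L ->
  (forall i, 0 <= C i) -> (forall i, (1 <= i < m)%N -> C i <= L - 1) ->
  C 0%N + T < L -> L ^+ m <= \sum_(i < m) C i * L ^+ i + T -> False.
Proof.
move=> hm hL hC hCi hT H.
have : \sum_(i < m) C i * L ^+ i <= C 0%N + (L ^+ m - L).
  rewrite -(big_mkord xpredT (fun i => C i * L ^+ i)) big_ltn // expr0 mulr1.
  rewrite -geom_tail // lerD2l; apply: ler_sum_nat => i /andP[h1 h2].
  rewrite ler_wpM2r //; first by apply: exprn_ge0; lra.
  by apply: hCi; rewrite h1 h2.
lra.
Qed.
End Num.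

Theorem theorem3p3 (R : realType) (m n : nat) (hm : (1 <= m)%N) (hn : (1 <= n)%N)
  (a : 'I_n -> R[i]) (ha : injective a) (mu : 'I_n -> nat)
  (hmu : forall j, (1 <= mu j)%N) (c : nat -> R[i]) (b : 'I_n -> nat -> R[i])
  (l0 : R[i]) (hl0 : is_zero_of m c a mu b l0) :
  (* (1) *)
  `|l0| <= Num.max (\big[Num.max/0]_(j < n) (1 + `|a j|))
             (\sum_(j < n) \sum_(1 <= k < (mu j).+1) `|b j k| + \sum_(i < m) `|c i|)
  /\
  (* (2), case all m_j = 1 *)
  ((forall j, mu j = 1%N) ->
     `|l0| <= Num.max (\big[Num.max/0]_(j < n) (`|a j| + `|b j 1%N|))
                (Num.max (\big[Num.max/0]_(1 <= i < m) (1 + `|c i|))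
                         (`|c 0%N| + n%:R)))
  /\
  (* (2), otherwise *)
  (~ (forall j, mu j = 1%N) ->
     `|l0| <= Num.max
                (\big[Num.max/0]_(j < n)
                   Num.max (\big[Num.max/0]_(1 <= k < (mu j).+1) (`|a j| + `|b j k|))
                           (1 + `|a j|))
                (Num.max (\big[Num.max/0]_(1 <= i < m) (1 + `|c i|))
                         (`|c 0%N| + (\sum_(j < n) mu j)%:R))).
Proof.
case: hl0 => hne hr; rewrite /ratfun in hr.
set L := nr l0.
have core : L ^+ m <= \sum_(i < m) nr (c i) * L ^+ i +
    \sum_(j < n) \sum_(1 <= k < (mu j).+1) nr (b j k) * (nr (l0 - a j) ^+ k)^-1.
  have e : l0 ^+ m = \sum_(i < m) c i * l0 ^+ i +
      \sum_(j < n) \sum_(1 <= k < (mu j).+1) b j k / (l0 - a j) ^+ k.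
    by apply/eqP; rewrite -subr_eq0 opprD addrA; apply/eqP.
  rewrite /L -nrX e; apply: le_trans (nrD _ _) _; apply: lerD.
    apply: le_trans (nr_sum _ _ _ _) _; apply: ler_sum => i _; by rewrite nrM nrX.
  apply: le_trans (nr_sum _ _ _ _) _; apply: ler_sum => j _.
  apply: le_trans (nr_sum _ _ _ _) _; apply: ler_sum => k _.
  by rewrite nrM nrV nrX.
have hDa j : L - nr (a j) <= nr (l0 - a j) by apply: nrB.
have hD0 j : 0 < nr (l0 - a j) by apply: nr_gt0; rewrite subr_eq0.
have j0 : 'I_n := Ordinal hn.
have hL : `|l0| = (L%:C)%C by rewrite normCE.
split; [|split].
-
  apply: (leE2 (normCE l0)); first by toR.
  rewrite -/L /= leNgt gt_max; apply/negP => /andP[hA hS].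
  have hAj j : 1 + nr (a j) < L.
    exact: le_lt_trans (le_bigmax _ (fun j => 1 + nr (a j)) j) hA.
  have hL1 : 1 < L by have := hAj j0; have := nr_ge0 (a j0); lra.
  have hD1 j : 1 <= nr (l0 - a j) by have := hAj j; have := hDa j; lra.
  move: hS; clear hr; case: m hm core => // m' _ core.
  set SB := \sum_(j < n) \sum_(1 <= k < (mu j).+1) nr (b j k).
  set SC := \sum_(i < m'.+1) nr (c i) => hS.
  have hSB : 0 <= SB by apply: sumr_ge0 => j _; apply: sumr_ge0 => k _; apply: nr_ge0.
  have h1 : \sum_(i < m'.+1) nr (c i) * L ^+ i <= SC * L ^+ m'.
    rewrite /SC mulr_suml; apply: ler_sum => i _; apply: ler_wpM2l; first exact: nr_ge0.
    by rewrite ler_eXn2l // -ltnS ltn_ord.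
  have h2 : \sum_(j < n) \sum_(1 <= k < (mu j).+1) nr (b j k) * (nr (l0 - a j) ^+ k)^-1 <= SB.
    apply: ler_sum => j _; apply: ler_sum => k _.
    rewrite ler_pdivrMr; last by apply: exprn_gt0; apply: lt_le_trans (hD1 j).
    by apply: ler_peMr; [apply: nr_ge0 | apply: exprn_ege1].
  have X1 : 1 <= L ^+ m' by apply: exprn_ege1; lra.
  rewrite exprS in core; move: core h1 h2 X1; set X := L ^+ m'; nra.
- move=> hmu1.
  apply: (leE2 (normCE l0)); first by toR.
  rewrite -/L /=.

  rewrite leNgt !gt_max; apply/negP => /and3P[hA hC hT].
  have hAj j : nr (a j) + nr (b j 1%N) < L.
    exact: le_lt_trans (le_bigmax _ (fun j => nr (a j) + nr (b j 1%N)) j) hA.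
  have hCi i : (1 <= i < m)%N -> nr (c i) <= L - 1.
    move=> hi; have := le_lt_trans (le_bigmax_seq 0 i xpredT (fun i => 1 + nr (c i)) _ isT) hC.
    by rewrite mem_index_iota hi => /(_ isT); lra.
  have hn1 : 1 <= (n%:R : R) by rewrite ler1n.
  have hL1 : 1 < L by have := nr_ge0 (c 0%N); lra.
  apply: (@cpart _ m (fun i => nr (c i)) L n%:R hm hL1 (fun i => nr_ge0 _) hCi hT).
  apply: le_trans core _; rewrite lerD2l.
  apply: le_trans (_ : \sum_(j < n) (1 : R) <= _); last by rewrite sumr_const card_ord.
  apply: ler_sum => j _; rewrite hmu1 big_nat1 expr1.
  rewrite ler_pdivrMr // mul1r; have := hAj j; have := hDa j; have := nr_ge0 (b j 1%N); lra.
- move=> _.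
  apply: (leE2 (normCE l0)); first by toR.
  rewrite -/L /= leNgt !gt_max; apply/negP => /and3P[hA hC hT].
  have hAj j : Num.max (\big[Num.max/0]_(1 <= k < (mu j).+1) (nr (a j) + nr (b j k)))
                       (1 + nr (a j)) < L.
    exact: le_lt_trans (le_bigmax _ (fun j => Num.max (\big[Num.max/0]_(1 <= k < (mu j).+1) (nr (a j) + nr (b j k)))
                       (1 + nr (a j))) j) hA.
  have hA1 j : 1 + nr (a j) < L by have := hAj j; rewrite gt_max => /andP[].
  have hABk j k : (1 <= k < (mu j).+1)%N -> nr (a j) + nr (b j k) < L.
    move=> hk; have := hAj j; rewrite gt_max => /andP[h _].
    have := le_lt_trans (le_bigmax_seq 0 k xpredT (fun k => nr (a j) + nr (b j k)) _ isT) h.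
    by rewrite mem_index_iota hk => /(_ isT).
  have hCi i : (1 <= i < m)%N -> nr (c i) <= L - 1.
    move=> hi; have := le_lt_trans (le_bigmax_seq 0 i xpredT (fun i => 1 + nr (c i)) _ isT) hC.
    by rewrite mem_index_iota hi => /(_ isT); lra.
  have hL1 : 1 < L by have := hA1 j0; have := nr_ge0 (a j0); lra.
  apply: (@cpart _ m (fun i => nr (c i)) L (\sum_(j < n) mu j)%:R hm hL1 (fun i => nr_ge0 _) hCi hT).
  apply: le_trans core _; rewrite lerD2l natr_sum.
  apply: ler_sum => j _.
  apply: le_trans (_ : \sum_(1 <= k < (mu j).+1) (1 : R) <= _); last first.
    by rewrite sumr_const_nat subSS subn0.
  apply: ler_sum_nat => k hk.
  have hD1 : 1 <= nr (l0 - a j) by have := hA1 j; have := hDa j; lra.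
  rewrite ler_pdivrMr ?mul1r; last by apply: exprn_gt0.
  apply: le_trans (ler_eXnr _ hD1); last by case/andP: hk.
  have := hABk j k hk; have := hDa j; lra.
Qed.
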